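(* Let $G$ be a graph with $n$ nodes, degree matrix $\mathbf{D}$ and normalized graph Laplacian $\tilde{\mathbf{L}}$, and let $\tilde{\mathbf{L}}=\mathbf{U}\mathbf{\Sigma}\mathbf{U}^T$ be an eigendecomposition of $\tilde{\mathbf{L}}$. Then for any $n\times n$ permutation matrix $\mathbf{M}$, the matrix $\mathbf{D}^{1/2}\mathbf{U}\mathbf{\Sigma}^{1/2}\mathbf{M}$ is adjacency-identifying.
   Context: Graphs are finite, undirected, without self-loops and without isolated nodes; $\mathbf{A}(G)$ is the adjacency matrix, $\mathbf{L}=\mathbf{D}-\mathbf{A}(G)$ and $\tilde{\mathbf{L}}=\mathbf{I}-\mathbf{D}^{-1/2}\mathbf{A}(G)\mathbf{D}^{-1/2}$. In the eigendecomposition, $\mathbf{U}$ is orthogonal and $\mathbf{\Sigma}$ diagonal with the nonnegative eigenvalues. $d_k>0$ is a fixed constant. A matrix $\mathbf{P}\in\mathbb{R}^{n\times e}$ is adjacency-identifying if there exist $\mathbf{W}^Q,\mathbf{W}^K\in\mathbb{R}^{e\times e}$ such that $\tilde{\mathbf{P}}=\frac{1}{\sqrt{d_k}}\mathbf{P}\mathbf{W}^Q(\mathbf{P}\mathbf{W}^K)^T$ satisfies $\tilde{\mathbf{P}}_{ij}=\max_k\tilde{\mathbf{P}}_{ik}\iff\mathbf{A}(G)_{ij}=1$ for all $i,j$. *)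

(* Defs.v *)
From HB Require Import structures.
From mathcomp Require Import all_boot all_order all_algebra all_fingroup.
Set Implicit Arguments. Unset Strict Implicit. Unset Printing Implicit Defensive.
Import Order.TTheory GRing.Theory Num.Theory.
Local Open Scope ring_scope.

Definition adjmx (R : rcfType) (n : nat) (adj : rel 'I_n) : 'M[R]_n :=
  \matrix_(i, j) (adj i j)%:R.

Definition degmx (R : rcfType) (n : nat) (A : 'M[R]_n) : 'M[R]_n :=
  diag_mx (\row_i \sum_j A i j).

Definition diag_sqrt (R : rcfType) (n : nat) (M : 'M[R]_n) : 'M[R]_n :=
  diag_mx (\row_i Num.sqrt (M i i)).

Definition norm_lap (R : rcfType) (n : nat) (A : 'M[R]_n) : 'M[R]_n :=
  1%:M - invmx (diag_sqrt (degmx A)) *m A *m invmx (diag_sqrt (degmx A)).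

(* P is adjacency-identifying for adjacency matrix A (with constant dk):
   there are WQ, WK with Pt := 1/sqrt(dk) * P WQ (P WK)^T such that
   Pt_ij = max_k Pt_ik  <->  A_ij = 1.  "Pt_ij is the row maximum" is
   written as "Pt_ik <= Pt_ij for all k". *)
Definition adjacency_identifying (R : rcfType) (n e : nat) (dk : R)
    (A : 'M[R]_n) (P : 'M[R]_(n, e)) : Prop :=
  exists WQ WK : 'M[R]_e,
    let Pt := (Num.sqrt dk)^-1 *: (P *m WQ *m (P *m WK)^T) in
    forall i j, (forall k, Pt i k <= Pt i j) <-> A i j = 1.

(* Main.v *)
Require Import Defs.
From HB Require Import structures.
From mathcomp Require Import all_boot all_order all_algebra all_fingroup.
From mathcomp Require Import lra.
Import Order.TTheory GRing.Theory Num.Theory.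
Local Open Scope ring_scope.

Theorem lemmaF10 (R : rcfType) (n : nat) (dk : R) (adj : rel 'I_n)
    (Hdk : 0 < dk)
    (Hsym : symmetric adj) (Hirr : irreflexive adj)
    (Hnoiso : forall i : 'I_n, exists j, adj i j)
    (U S : 'M[R]_n)
    (HU : U *m U^T = 1%:M /\ U^T *m U = 1%:M)
    (HSdiag : is_diag_mx S) (HSnn : forall i, 0 <= S i i)
    (Hdec : norm_lap (adjmx R adj) = U *m S *m U^T)
    (M : 'M[R]_n) (HM : is_perm_mx M) :
  adjacency_identifying dk (adjmx R adj)
    (diag_sqrt (degmx (adjmx R adj)) *m U *m diag_sqrt S *m M).
Proof.
set A := adjmx R adj.
set d := fun i => \sum_j A i j.
have Age0 : forall i j, 0 <= A i j by move=> i j; rewrite /A /adjmx mxE ler0n.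
have dpos : forall i, 0 < d i.
  move=> i; have [j aij] := Hnoiso i.
  rewrite /d (bigD1 j) //= {1}/A /adjmx mxE aij.
  by apply: ltr_wpDr; [apply: sumr_ge0 => k _; apply: Age0 | apply: ltr01].
set Dh := diag_sqrt (degmx A).
have DhE : Dh = diag_mx (\row_i Num.sqrt (d i)).
  by rewrite /Dh /diag_sqrt /degmx; congr diag_mx; apply/rowP => i; rewrite !mxE eqxx mulr1n.
set Di := diag_mx (\row_i (Num.sqrt (d i))^-1).
have sq0 : forall i, Num.sqrt (d i) != 0 by move=> i; rewrite gt_eqF // sqrtr_gt0.
have DhDi : Dh *m Di = 1%:M.
  rewrite DhE mulmx_diag; apply/matrixP => i j; rewrite !mxE divff //.
have DiDh : Di *m Dh = 1%:M.
  rewrite DhE mulmx_diag; apply/matrixP => i j; rewrite !mxE mulVf //.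
have uDh : Dh \in unitmx := (mulmx1_unit DhDi).1.
have invE : invmx Dh = Di.
  by rewrite -[invmx Dh]mul1mx -DiDh -mulmxA mulmxV // mulmx1.
have DhDh : Dh *m Dh = degmx A.
  rewrite DhE mulmx_diag /degmx; congr diag_mx; apply/rowP=> i.
  by rewrite !mxE -expr2 sqr_sqrtr // ltW.
set Ss := diag_sqrt S.
have SsSs : Ss *m Ss = S.
  rewrite /Ss /diag_sqrt mulmx_diag; apply/matrixP=> i j; rewrite !mxE.
  case: eqVneq => [->|neq]; first by rewrite mulr1n -expr2 sqr_sqrtr.
  by rewrite mulr0n (is_diag_mxP HSdiag i j).
have MMt : M *m M^T = 1%:M.
  by case/is_perm_mxP: HM => s ->; rewrite tr_perm_mx -perm_mxM mulgV perm_mx1.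
set P := Dh *m U *m Ss *m M.
have PPt : P *m P^T = degmx A - A.
  have -> : P *m P^T = Dh *m U *m Ss *m (M *m M^T) *m Ss^T *m U^T *m Dh^T
    by rewrite /P !trmx_mul !mulmxA.
  rewrite MMt mulmx1 /Ss /Dh !tr_diag_mx -/Ss -/Dh -(mulmxA _ Ss Ss) SsSs.
  have -> : Dh *m U *m S *m U^T *m Dh = Dh *m (U *m S *m U^T) *m Dh
    by rewrite !mulmxA.
  rewrite -Hdec /norm_lap -/A -/Dh invE.
  rewrite mulmxBr mulmxBl mulmx1 DhDh !mulmxA DhDi mul1mx -mulmxA DiDh mulmx1.
  done.
exists (- 1%:M), 1%:M.
set c := (Num.sqrt dk)^-1.
have cpos : 0 < c by rewrite invr_gt0 sqrtr_gt0.
have PtE : forall i k, (c *: (P *m - 1%:M *m (P *m 1%:M)^T)) i k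
                = c * ((adj i k)%:R - d i *+ (i == k)).
  by move=> i k; rewrite mulmxN !mulmx1 mulNmx PPt opprB !mxE.
move=> Pt i j.
have ne : forall k, adj i k -> (i == k) = false.
  by move=> k aik; apply/negbTE; apply/eqP => e; move: aik; rewrite e Hirr.
split.
- move=> H. have [k aik] := Hnoiso i. have := H k. rewrite /Pt !PtE aik (ne k aik).
  rewrite /= mulr0n subr0 mulr1.
  case: (eqVneq i j) => [<-|nij].
    rewrite Hirr ?eqxx /= ?mulr1n sub0r => h.
    have : c <= 0 by apply: le_trans h _; rewrite pmulr_rle0 // oppr_le0 ltW.
    by rewrite leNgt cpos.
  rewrite ?(negbTE nij) /= ?mulr0n subr0.
  case e: (adj i j) => /=; first by rewrite /A /adjmx mxE e.
  by rewrite mulr0 leNgt cpos.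
- rewrite /A /adjmx mxE. case e: (adj i j) => /=; last first.
    by move=> /esym/eqP; rewrite oner_eq0.
  move=> _ k. rewrite /Pt !PtE e (ne j e) /= mulr0n subr0 mulr1.
  rewrite -{2}(mulr1 c) ler_pM2l //.
  have := dpos i.
  by case: (i == k); case: (adj i k) => /=; rewrite ?mulr1n ?mulr0n => h; lra.
Qed.
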